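(* Setup: - Let $(X_t)_{t\ge0}$ be real random variables adapted to a filtration $(\mathcal F_t)_{t\ge0}$. - Let $\tau$ be a stopping time with respect to $(\mathcal F_t)$. - Let $D,s\ge0$ and $R\in\mathbb R$. Assume that for every $t\ge1$, conditioned on $\mathcal F_{t-1}$: - (C1) $\mathbf 1_{\tau>t-1}\,(\mathbb E[X_t\mid\mathcal F_{t-1}]-X_{t-1}-R)\le0$; - (C2) $\mathbf 1_{\tau>t-1}(X_t-X_{t-1}-R)$ satisfies the one-sided $(D,s)$-Bernstein condition. For $h>0$ define - $\tau_X^+=\inf\{t\ge0:X_t\ge X_0+h\}$, - $\tau_X^-=\inf\{t\ge0:X_t\le X_0-h\}$. Then: (i) If $R\ge0$, then for any $h,T>0$ with $z:=h-RT>0$, $$\Pr[\tau_X^+\le\min\{T,\tau\}]\le\exp\Big(-\frac{z^2/2}{sT+zD/3}\Big).$$ (ii) If $R<0$, then for any $h,T>0$ with $z:=(-R)T-h>0$, $$\Pr[\min\{\tau_X^-,\tau\}>T]\le\exp\Big(-\frac{z^2/2}{sT+zD/3}\Big).$$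
   Context: **Bernstein conditions.** Let $D,s\ge0$. - A real random variable $X$ satisfies the $(D,s)$-Bernstein condition if $\mathbb E[e^{\lambda X}]\le\exp\big(\frac{\lambda^2 s/2}{1-|\lambda|D/3}\big)$ for all $\lambda\in\mathbb R$ with $|\lambda|D<3$. - It satisfies the one-sided $(D,s)$-Bernstein condition if the same inequality holds for all $\lambda\ge0$ with $\lambda D<3$. - A random variable ''conditioned on $\mathcal F_{t-1}$'' satisfies such a condition if the inequality holds with $\mathbb E[\cdot\mid\mathcal F_{t-1}]$ in place of $\mathbb E$, almost surely. *)

(* Defs.v *)
From mathcomp Require Import all_boot all_order all_algebra.
From mathcomp Require Import all_classical all_reals all_analysis.
Set Implicit Arguments. Unset Strict Implicit. Unset Printing Implicit Defensive.
Import Order.TTheory GRing.Theory Num.Theory.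
Local Open Scope classical_set_scope.
Local Open Scope ring_scope.

Definition sub_sigma_algebra d (T : measurableType d) (G : set (set T)) :=
  sigma_algebra setT G /\ G `<=` measurable.

Definition G_measurable d (T : measurableType d) (R : realType)
    (G : set (set T)) (g : T -> R) :=
  forall B : set R, measurable B -> G (g @^-1` B).

Definition cond_exp_version d (T : measurableType d) (R : realType)
    (P : probability T R) (G : set (set T)) (Y g : T -> R) :=
  [/\ G_measurable G g,
      P.-integrable setT (EFin \o g),
      P.-integrable setT (EFin \o Y) &
      forall A, G A ->
        (\int[P]_(x in A) (g x)%:E = \int[P]_(x in A) (Y x)%:E)%E].

Definition filtration d (T : measurableType d) (F : nat -> set (set T)) :=
  (forall t, sub_sigma_algebra (F t)) /\ (forall s t, (s <= t)%N -> F s `<=` F t).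

Definition adapted d (T : measurableType d) (R : realType)
    (F : nat -> set (set T)) (X : nat -> T -> R) :=
  forall t, G_measurable (F t) (X t).

(* Random times with values in nat \cup {+oo}: None stands for +oo. *)
Definition tlt (t : nat) (o : option nat) : bool :=
  if o is Some n then (t < n)%N else true.
Definition tle (t : nat) (o : option nat) : bool :=
  if o is Some n then (t <= n)%N else true.

Definition stopping_time d (T : measurableType d)
    (F : nat -> set (set T)) (tau : T -> option nat) :=
  forall t, F t [set w | ~~ tlt t (tau w)].

Definition cond_bernstein_onesided d (T : measurableType d) (R : realType)
    (P : probability T R) (G : set (set T)) (D s : R) (Y : T -> R) :=
  forall lam : R, 0 <= lam -> lam * D < 3 ->
    exists g, cond_exp_version P G (fun w => expR (lam * Y w)) g /\
      {ae P, forall w, g w <= expR ((lam ^+ 2 * s / 2) / (1 - lam * D / 3))}.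

(* Main.v *)
Require Import Defs.
From mathcomp Require Import all_boot all_order all_algebra.
From mathcomp Require Import all_classical all_reals all_analysis.
From mathcomp Require Import ring lra.
Import measurable_realfun.
Import Order.TTheory GRing.Theory Num.Theory.
Local Open Scope classical_set_scope.
Local Open Scope ring_scope.

Module Helpers.
Set Implicit Arguments. Unset Strict Implicit. Unset Printing Implicit Defensive.

Section H1.
Context d (Om : measurableType d) (R : realType).

Lemma GmP (G : set (set Om)) (f : Om -> R) : Defs.sub_sigma_algebra G ->
  G_measurable G f <-> measurable_fun (setT : set (g_sigma_algebraType G)) f.
Proof.
move=> [sG _]; rewrite /G_measurable /measurable_fun.
have E := measurable_g_measurableTypeE sG.
split.
- move=> h _ B mB; rewrite setTI.
  have -> : (measurable : set (set (g_sigma_algebraType G))) = G by exact: E.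
  exact: h.
- move=> h B mB; have := h measurableT B mB; rewrite setTI.
  by have -> : (measurable : set (set (g_sigma_algebraType G))) = G by exact: E.
Qed.

Lemma Gm_meas (G : set (set Om)) (f : Om -> R) : Defs.sub_sigma_algebra G ->
  G_measurable G f -> measurable_fun setT f.
Proof. by move=> [_ sub] h _ B mB; rewrite setTI; apply: sub; exact: h. Qed.

Lemma Gm_mono (G H : set (set Om)) (f : Om -> R) : G `<=` H ->
  G_measurable G f -> G_measurable H f.
Proof. by move=> sub h B mB; apply: sub; exact: h. Qed.

Lemma Gm_set (G : set (set Om)) (f : Om -> R) (B : set R) :
  G_measurable G f -> measurable B -> G (f @^-1` B).
Proof. by move=> h mB; exact: h. Qed.

Lemma Gset_meas (G : set (set Om)) (A : set Om) : Defs.sub_sigma_algebra G ->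
  G A -> measurable (A : set (g_sigma_algebraType G)).
Proof.
move=> [sG _] GA.
by have -> : (measurable : set (set (g_sigma_algebraType G))) = G
  by exact: measurable_g_measurableTypeE.
Qed.

Lemma Gset_measE (G : set (set Om)) (A : set Om) : Defs.sub_sigma_algebra G ->
  measurable (A : set (g_sigma_algebraType G)) -> G A.
Proof.
move=> [sG _].
by have -> : (measurable : set (set (g_sigma_algebraType G))) = G
  by exact: measurable_g_measurableTypeE.
Qed.

End H1.


Section H2.
Context d (Om : measurableType d) (R : realType) (mu : {measure set Om -> \bar R}).

Lemma int_le_ae (B : set Om) (g : Om -> R) (c : R) : measurable B ->
  0 <= c -> measurable_fun setT g ->
  {ae mu, forall w, g w <= c} ->
  (\int[mu]_(x in B) (g x)%:E <= c%:E * mu B)%E.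
Proof.
move=> mB c0 mg hae.
rewrite integralE.
apply: (@le_trans _ _ (\int[mu]_(x in B) (EFin \o g)^\+ x)%E).
  rewrite -[leRHS]adde0; apply: leeD => //.
  by rewrite oppe_le0; apply: integral_ge0 => x _; exact: funeneg_ge0.
rewrite -integral_cst//.
apply: ae_ge0_le_integral => //.
- apply: measurable_funepos; apply/measurable_EFinP.
  exact: (measurable_funS measurableT (@subsetT _ B) mg).
- apply: filterS hae => x gc _ /=.
  by rewrite funeposE /= ge_max !lee_fin gc c0.
Qed.


Lemma int_indicV (B : set Om) (V : Om -> R) : measurable B ->
  (\int[mu]_x (\1_B x * V x)%:E = \int[mu]_(x in B) (V x)%:E)%E.
Proof.
move=> mB; rewrite [RHS]integral_mkcond; apply: eq_integral => x _.
rewrite patchE indicE; case: (x \in B) => /=.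
  by rewrite mul1r.
by rewrite mul0r.
Qed.

Lemma int_indic1 (B : set Om) : measurable B ->
  (\int[mu]_x (\1_B x)%:E = mu B)%E.
Proof. by move=> mB; rewrite integral_indic// setIT. Qed.

Variables (V : Om -> R) (c : R).
Hypothesis V0 : forall x, 0 <= V x.
Hypothesis mV : measurable_fun setT V.
Hypothesis c0 : 0 <= c.

Lemma L1 (a : R) (B : set Om) : 0 <= a -> measurable B ->
  (\int[mu]_(x in B) (V x)%:E <= c%:E * mu B)%E ->
  (\int[mu]_x (a * \1_B x * V x)%:E <= c%:E * \int[mu]_x (a * \1_B x)%:E)%E.
Proof.
move=> a0 mB hB.
under eq_integral do rewrite -mulrA EFinM.
rewrite ge0_integralZl_EFin//; last 2 first.
- by move=> x _; rewrite lee_fin mulr_ge0.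
- apply/measurable_EFinP; apply: measurable_funM => //; exact: measurable_indic.
under [X in (_ <= _ * X)%E]eq_integral do rewrite EFinM.
rewrite ge0_integralZl_EFin//.
rewrite int_indicV// int_indic1// muleCA.
  exact: lee_wpmul2l.
by apply/measurable_EFinP; exact: measurable_indic.
Qed.

Lemma meas_sum (I : Type) (s : seq I) (a : I -> R) (A : I -> set Om) :
  (forall i, measurable (A i)) ->
  measurable_fun setT (fun x => \sum_(i <- s) a i * \1_(A i) x).
Proof.
move=> mA; elim: s => [|i s IH].
  by under eq_fun do rewrite big_nil; exact: measurable_cst.
under eq_fun do rewrite big_cons.
apply: measurable_funD => //; apply: measurable_funM => //;
  exact: measurable_indic.
Qed.

Lemma Ls (I : Type) (s : seq I) (a : I -> R) (A : I -> set Om) :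
  (forall i, 0 <= a i) -> (forall i, measurable (A i)) ->
  (forall i, \int[mu]_(x in A i) (V x)%:E <= c%:E * mu (A i))%E ->
  (\int[mu]_x ((\sum_(i <- s) a i * \1_(A i) x) * V x)%:E
     <= c%:E * \int[mu]_x (\sum_(i <- s) a i * \1_(A i) x)%:E)%E.
Proof.
move=> a0 mA hA; elim: s => [|i s IH].
  under eq_integral do rewrite big_nil mul0r.
  under [X in (_ <= _ * X)%E]eq_integral do rewrite big_nil.
  by rewrite integral0 mule0.
under eq_integral do rewrite big_cons mulrDl EFinD.
under [X in (_ <= _ * X)%E]eq_integral do rewrite big_cons EFinD.
have sum0 x : 0 <= \sum_(i <- s) a i * \1_(A i) x.
  by apply: sumr_ge0 => j _; rewrite mulr_ge0.
rewrite ge0_integralD//; last 4 first.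
- by move=> x _; rewrite lee_fin !mulr_ge0.
- apply/measurable_EFinP; apply: measurable_funM => //; apply: measurable_funM => //; exact: measurable_indic.
- by move=> x _; rewrite lee_fin mulr_ge0.
- by apply/measurable_EFinP; apply: measurable_funM => //; exact: meas_sum.
rewrite [X in (_ <= _ * X)%E]ge0_integralD//; last 4 first.
- by move=> x _; rewrite lee_fin mulr_ge0.
- apply/measurable_EFinP; apply: measurable_funM => //; exact: measurable_indic.
- by move=> x _; rewrite lee_fin.
- by apply/measurable_EFinP; exact: meas_sum.
rewrite ge0_muleDr; last 2 first.
- by apply: integral_ge0 => x _; rewrite lee_fin mulr_ge0.
- by apply: integral_ge0 => x _; rewrite lee_fin.
apply: leeD => //; exact: L1.
Qed.

End H2.


Section H3.
Context d (Om : measurableType d) (R : realType) (mu : {measure set Om -> \bar R}).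

Lemma G0 (G : set (set Om)) : Defs.sub_sigma_algebra G -> G set0.
Proof. by move=> [[]]. Qed.

Lemma Gsub (G : set (set Om)) A : Defs.sub_sigma_algebra G -> G A -> measurable A.
Proof. by move=> [_ h]; exact: h. Qed.

Section K.
Variables (G : set (set Om)) (hG : Defs.sub_sigma_algebra G).
Variables (V Z : Om -> R) (c : R).
Hypotheses (c0 : 0 <= c) (V0 : forall x, 0 <= V x) (mV : measurable_fun setT V).
Hypothesis hV : forall B, G B -> (\int[mu]_(x in B) (V x)%:E <= c%:E * mu B)%E.
Hypotheses (Z0 : forall x, 0 <= Z x) (GZ : G_measurable G Z).

Let f := EFin \o Z.
Let f0 : forall x, setT x -> (0 <= f x)%E.
Proof. by move=> x _; rewrite lee_fin. Qed.

Let a n (i : option nat) : R :=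
  if i is Some k then k%:R * 2 ^- n else n%:R.
Let A n (i : option nat) : set Om :=
  if i is Some k then dyadic_approx setT f n k else integer_approx setT f n.
Let sq n := None :: map Some (iota 0 (n * 2 ^ n)).

Let a0 n i : 0 <= a n i.
Proof. by case: i => [k|] /=. Qed.

Let GA n i : G (A n i).
Proof.
case: i => [k|] /=.
  rewrite /dyadic_approx; case: ifP => _; last exact: G0.
  rewrite setTI.
  have -> : [set x | f x \in EFin @` [set` dyadic_itv R n k]] =
            Z @^-1` [set` dyadic_itv R n k].
    apply/funext => x; apply/propext; rewrite /preimage /= inE /=; split.
      by move=> [r rI]; rewrite /f /= => -[<-].
    by move=> h; exists (Z x).
  exact: GZ.
rewrite /integer_approx setTI.
have -> : [set x | (n%:R%:E <= f x)%E] = Z @^-1` `[n%:R, +oo[.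
  apply/funext => x; apply/propext; rewrite /preimage /= in_itv /= andbT.
  by rewrite lee_fin.
exact: GZ.
Qed.

Let mA n i : measurable (A n i).
Proof. exact: Gsub (GA n i). Qed.

Let approxE n x : approx setT f n x = \sum_(i <- sq n) a n i * \1_(A n i) x.
Proof.
rewrite /approx /sq big_cons big_map addrC; congr (_ + _).
rewrite -(big_mkord xpredT (fun k => k%:R / 2 ^+ n * \1_(dyadic_approx setT f n k) x)).
by rewrite /index_iota subn0.
Qed.

Let approx_ge0 n x : 0 <= approx setT f n x.
Proof. by rewrite approxE; apply: sumr_ge0 => i _; rewrite mulr_ge0. Qed.

Let m_approx n : measurable_fun setT (approx setT f n).
Proof.
have -> : approx setT f n = (fun x => \sum_(i <- sq n) a n i * \1_(A n i) x).
  by apply/funext => x; exact: approxE.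
exact: meas_sum.
Qed.

Let step n : (\int[mu]_x (approx setT f n x * V x)%:E <=
   c%:E * \int[mu]_x (Z x)%:E)%E.
Proof.
under eq_integral do rewrite approxE.
apply: (le_trans (@Ls _ _ _ mu V c V0 mV _ (sq n) (a n) (A n) (a0 n) (mA n)
   (fun i => hV (GA n i)))).
apply: lee_wpmul2l; first by rewrite lee_fin.
under eq_integral do rewrite -approxE.
apply: ge0_le_integral => //; first [ by move=> x _; rewrite lee_fin
  | by apply/measurable_EFinP; exact: Gm_meas GZ | exact/measurable_EFinP
  | by move=> x _; exact: le_approx ].
Qed.

Lemma K : (\int[mu]_x (Z x * V x)%:E <= c%:E * \int[mu]_x (Z x)%:E)%E.
Proof.
pose g n x := (approx setT f n x * V x)%:E.
have mg n : measurable_fun setT (g n).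
  by apply/measurable_EFinP; exact: measurable_funM.
have g0 n x : setT x -> (0 <= g n x)%E.
  by move=> _; rewrite lee_fin mulr_ge0.
have ndg x : setT x -> {homo g^~ x : n m / (n <= m)%N >-> (n <= m)%E}.
  move=> _ n m nm; rewrite lee_fin ler_wpM2r//.
  by have /lefP := nd_approx setT f nm; apply.
have limg x : limn (g^~ x) = (Z x * V x)%:E.
  apply: (cvg_lim (@ereal_hausdorff R)).
  apply: cvg_EFin; first exact: nearW.
  apply: cvgMr_tmp.
  exact: (@cvg_approx _ _ R setT f x f0 Logic.I (ltry _)).
have -> : (\int[mu]_x (Z x * V x)%:E = \int[mu]_x limn (g^~ x))%E.
  by apply: eq_integral => x _; rewrite limg.
rewrite monotone_convergence//.
apply: lime_le.
  exact: cvgP (cvg_monotone_convergence _ _ _ _).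
by apply: nearW => n; exact: step.
Qed.

End K.
End H3.


Section H4.
Context d (Om : measurableType d) (R : realType) (mu : probability Om R).

Lemma hV_of (G : set (set Om)) (V g : Om -> R) (c : R) :
  Defs.sub_sigma_algebra G -> 0 <= c ->
  cond_exp_version mu G V g -> {ae mu, forall w, g w <= c} ->
  measurable_fun setT V /\
  forall B, G B -> (\int[mu]_(x in B) (V x)%:E <= c%:E * mu B)%E.
Proof.
move=> hG c0 [Gg ig iV eq] hae; split.
  by move/integrableP : iV => [/measurable_EFinP].
move=> B GB; rewrite -eq//.
apply: int_le_ae => //; first exact: Gsub GB.
exact: Gm_meas Gg.
Qed.

Lemma GmM (G : set (set Om)) (f g : Om -> R) : Defs.sub_sigma_algebra G ->
  G_measurable G f -> G_measurable G g -> G_measurable G (f \* g).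
Proof.
move=> hG /(GmP _ hG) mf /(GmP _ hG) mg; apply/(GmP _ hG).
exact: measurable_funM.
Qed.

Lemma GmD (G : set (set Om)) (f g : Om -> R) : Defs.sub_sigma_algebra G ->
  G_measurable G f -> G_measurable G g -> G_measurable G (f \+ g).
Proof.
move=> hG /(GmP _ hG) mf /(GmP _ hG) mg; apply/(GmP _ hG).
exact: measurable_funD.
Qed.

Lemma GmB (G : set (set Om)) (f g : Om -> R) : Defs.sub_sigma_algebra G ->
  G_measurable G f -> G_measurable G g -> G_measurable G (f \- g).
Proof.
move=> hG /(GmP _ hG) mf /(GmP _ hG) mg; apply/(GmP _ hG).
exact: measurable_funB.
Qed.

Lemma Gmcst (G : set (set Om)) (r : R) : Defs.sub_sigma_algebra G ->
  G_measurable G (cst r).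
Proof. move=> hG; apply/(GmP _ hG); exact: measurable_cst. Qed.

Lemma Gmexp (G : set (set Om)) (f : Om -> R) : Defs.sub_sigma_algebra G ->
  G_measurable G f -> G_measurable G (fun x => expR (f x)).
Proof.
move=> hG /(GmP _ hG) mf; apply/(GmP _ hG).
by apply: measurableT_comp; [exact: measurable_expR | exact: mf].
Qed.

Lemma Gmind (G : set (set Om)) (A : set Om) : Defs.sub_sigma_algebra G ->
  G A -> G_measurable G (\1_A : Om -> R).
Proof.
move=> hG GA; apply/(GmP _ hG).
exact: measurable_indic (Gset_meas hG GA).
Qed.

Section step.
Variables (G : set (set Om)) (hG : Defs.sub_sigma_algebra G).
Variables (V Q : Om -> R) (c : R) (A : set Om).
Hypotheses (c1 : 1 <= c) (V0 : forall x, 0 <= V x) (mV : measurable_fun setT V).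
Hypothesis hV : forall B, G B -> (\int[mu]_(x in B) (V x)%:E <= c%:E * mu B)%E.
Hypotheses (Q0 : forall x, 0 <= Q x) (GQ : G_measurable G Q) (GA : G A).

Lemma step_ind :
  (\int[mu]_x (Q x * (\1_A x * V x + (1 - \1_A x)))%:E <= c%:E * \int[mu]_x (Q x)%:E)%E.
Proof.
have c0 : 0 <= c by apply: le_trans c1.
have mA : measurable A := Gsub hG GA.
have mQ : measurable_fun setT Q := Gm_meas hG GQ.
have i0 x : 0 <= \1_A x :> R by rewrite indicE; case: (x \in A).
have i1 x : 0 <= 1 - \1_A x :> R.
  by rewrite indicE; case: (x \in A); rewrite /= ?subrr ?subr0.
have mi : measurable_fun setT (\1_A : Om -> R) := measurable_indic mA.
have m1i : measurable_fun setT (fun x => 1 - \1_A x : R).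
  by apply: measurable_funB => //; exact: measurable_cst.
under eq_integral do rewrite mulrDr mulrA EFinD.
rewrite ge0_integralD//; first last.
- by apply/measurable_EFinP; apply: measurable_funM.
- by move=> x _; rewrite lee_fin mulr_ge0.
- by apply/measurable_EFinP; apply: measurable_funM => //; apply: measurable_funM.
- by move=> x _; rewrite lee_fin !mulr_ge0.
have -> : (\int[mu]_x (Q x)%:E = \int[mu]_x (Q x * \1_A x)%:E
                                + \int[mu]_x (Q x * (1 - \1_A x))%:E)%E.
  rewrite -ge0_integralD//; first last.
  - by apply/measurable_EFinP; apply: measurable_funM.
  - by move=> x _; rewrite lee_fin mulr_ge0.
  - by apply/measurable_EFinP; apply: measurable_funM.
  - by move=> x _; rewrite lee_fin mulr_ge0.
  by apply: eq_integral => x _; rewrite -EFinD -mulrDr addrC subrK mulr1.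
rewrite ge0_muleDr; first last.
- by apply: integral_ge0 => x _; rewrite lee_fin mulr_ge0.
- by apply: integral_ge0 => x _; rewrite lee_fin mulr_ge0.
apply: leeD.
  apply: (K hG) => //.
  - by move=> x; rewrite mulr_ge0.
  - by apply: GmM => //; exact: Gmind.
apply: lee_pemull; last by rewrite lee_fin.
by apply: integral_ge0 => x _; rewrite lee_fin mulr_ge0.
Qed.

End step.

End H4.


Section H5.
Context d (Om : measurableType d) (R : realType) (mu : probability Om R).
Variables (F : nat -> set (set Om)) (hF : filtration F).
Variables (lam c : R) (c1 : 1 <= c) (Y : nat -> Om -> R) (A : nat -> set Om).
Hypothesis hY : forall u, G_measurable (F u.+1) (Y u).
Hypothesis hA : forall u, F u (A u).
Hypothesis hB : forall u, exists g, cond_exp_version mu (F u)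
   (fun w => expR (lam * Y u w)) g /\ {ae mu, forall w, g w <= c}.

Definition Ssum t x := \sum_(0 <= u < t) \1_(A u) x * Y u x.

Lemma GS t : G_measurable (F t) (Ssum t).
Proof.
elim: t => [|t IH].
  rewrite /Ssum; have -> : (fun x => \sum_(0 <= u < 0) \1_(A u) x * Y u x) = cst 0.
    by apply/funext => x; rewrite big_geq.
  exact: Gmcst (hF.1 0%N).
have -> : Ssum t.+1 = Ssum t \+ (\1_(A t) \* Y t).
  by apply/funext => x; rewrite /Ssum big_nat_recr.
apply: GmD; first exact: hF.1.
  exact: Gm_mono (hF.2 _ _ (leqnSn t)) IH.
apply: GmM; first exact: hF.1.
  apply: Gmind; first exact: hF.1.
  exact: (hF.2 _ _ (leqnSn t)).
exact: hY.
Qed.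

Lemma iter_bound t : (\int[mu]_x (expR (lam * Ssum t x))%:E <= (c ^+ t)%:E)%E.
Proof.
elim: t => [|t IH].
  under eq_integral do rewrite /Ssum big_geq// mulr0 expR0.
  by rewrite integral_cst// mul1e expr0; exact: probability_le1.
have [g [hg hae]] := hB t.
have c0 : 0 <= c by apply: le_trans c1.
have [mV hV] := hV_of (hF.1 t) c0 hg hae.
under eq_integral => x _ do rewrite /Ssum big_nat_recr//= -/(Ssum t x) mulrDr expRD.
have -> : (\int[mu]_x (expR (lam * Ssum t x) * expR (lam * (\1_(A t) x * Y t x)))%:E
   = \int[mu]_x (expR (lam * Ssum t x) * (\1_(A t) x * expR (lam * Y t x)
        + (1 - \1_(A t) x)))%:E)%E.
  apply: eq_integral => x _; congr (_ * _)%:E.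
  by rewrite indicE; case: (x \in A t); rewrite /= ?mul1r ?mul0r ?subrr ?subr0
     ?addr0 ?add0r ?mulr0 ?expR0.
apply: le_trans (step_ind (hF.1 t) c1 _ mV hV _ _ (hA t)) _.
all: try (by move=> x; exact: expR_ge0).
all: try (apply: Gmexp; first exact: hF.1;
  apply: GmM; [exact: hF.1|exact: Gmcst (hF.1 t)|exact: GS]).
rewrite exprS EFinM; apply: lee_wpmul2l => //; by rewrite lee_fin.
Qed.


Lemma markov_bound (E : set Om) (z : R) T : 0 <= lam -> measurable E ->
  (forall w, E w -> z <= Ssum T w) ->
  (mu E <= (expR (- (lam * z)) * c ^+ T)%:E)%E.
Proof.
move=> lam0 mE hE.
have mS : measurable_fun setT (fun x => expR (lam * Ssum T x)).
  apply: (Gm_meas (hF.1 T)); apply: Gmexp; first exact: hF.1.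
  apply: GmM; [exact: hF.1|exact: Gmcst (hF.1 T)|exact: GS].
have key : ((expR (lam * z))%:E * mu E <= (c ^+ T)%:E)%E.
  apply: le_trans (iter_bound T).
  rewrite -int_indic1// -ge0_integralZl_EFin//; last first.
    by apply/measurable_EFinP; exact: measurable_indic.
  apply: ge0_le_integral => //.
  - have -> : (fun x => ((expR (lam * z))%:E * (\1_E x)%:E)%E) =
              EFin \o (fun x => expR (lam * z) * \1_E x).
      by apply/funext => x; rewrite /= EFinM.
    apply/measurable_EFinP; apply: measurable_funM;
      [exact: measurable_cst | exact: measurable_indic].
  - exact/measurable_EFinP.
  - move=> x _; rewrite -EFinM indicE; case: (boolP (x \in E)) => xE.
      by rewrite mulr1 lee_fin ler_expR ler_wpM2l// hE//; rewrite inE in xE.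
    by rewrite mulr0 lee_fin expR_ge0.
have -> : mu E = ((expR (- (lam * z)))%:E * ((expR (lam * z))%:E * mu E))%E.
  by rewrite muleA -EFinM -expRD addNr expR0 mul1e.
rewrite EFinM; apply: lee_wpmul2l => //;
by rewrite lee_fin expR_ge0.
Qed.

End H5.


Section H6.
Variable R : realType.

Lemma choose_lam (z s D Tn : R) : 0 < z -> 0 <= s -> 0 <= D -> 0 < Tn ->
  0 < s * Tn + z * D / 3 ->
  exists lam, [/\ 0 <= lam, lam * D < 3 &
   - (lam * z) + (lam ^+ 2 * s / 2) / (1 - lam * D / 3) * Tn
     <= - ((z ^+ 2 / 2) / (s * Tn + z * D / 3))].
Proof.
move=> z0 s0 D0 T0 den0.
have [se|sp] := eqVneq s 0.
  rewrite se in den0 *.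
  have Dp : 0 < D.
    rewrite lt_neqAle D0 andbT; apply/eqP => D0'.
    by move: den0; rewrite -D0' !(mulr0, mul0r, addr0) ltxx.
  exists (3 / (2 * D)); split.
  - by rewrite divr_ge0// mulr_ge0.
  - have -> : 3 / (2 * D) * D = 3 / 2 by field; rewrite gt_eqF.
    lra.
  - rewrite le_eqVlt; apply/orP; left; apply/eqP.
    by field; rewrite !gt_eqF.
have sp' : 0 < s by rewrite lt_neqAle eq_sym sp s0.
have sT : 0 < s * Tn by rewrite mulr_gt0.
set den := s * Tn + z * D / 3.
exists (z / den); split.
- by rewrite divr_ge0// ltW.
- rewrite mulrAC ltr_pdivrMr// /den; lra.
- rewrite le_eqVlt; apply/orP; left; apply/eqP.
  rewrite /den; field.
  by apply/andP; split; rewrite gt_eqF//; lra.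
Qed.


Lemma inv_lemma (y : nat -> R) (b : nat -> bool) (z : R) (T : nat) :
  0 < z ->
  (forall u, b u <-> (forall v, (v <= u)%N -> \sum_(0 <= k < v) y k < z)) ->
  (exists t0, (t0 <= T)%N /\ z <= \sum_(0 <= k < t0) y k) ->
  z <= \sum_(0 <= u < T) (b u)%:R * y u.
Proof.
move=> z0 hb [t0 [t0T zt0]].
pose S0 v := \sum_(0 <= k < v) y k.
pose S' t := \sum_(0 <= u < t) (b u)%:R * y u.
have I t : (b t /\ S' t = S0 t) \/ (z <= S' t /\ ~~ b t).
  elim: t => [|t [[bt e]|[zt nbt]]].
  - left; split; last by rewrite /S' /S0 !big_geq.
    apply/hb => v; rewrite leqn0 => /eqP ->; by rewrite big_geq.
  - have e1 : S' t.+1 = S0 t.+1.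
      by rewrite /S' /S0 !big_nat_recr//= -/(S' t) -/(S0 t) e bt mul1r.
    have [lt|ge] := ltP (S0 t.+1) z.
      left; split => //; apply/hb => v; rewrite leq_eqVlt => /orP[/eqP ->//|].
      by rewrite ltnS => /(proj1 (hb t) bt).
    right; split; first by rewrite e1.
    apply/negP => /hb /(_ t.+1 (leqnn _)); rewrite -/(S0 t.+1).
    by rewrite ltNge ge.
  - right; split.
      by rewrite /S' big_nat_recr//= -/(S' t) (negbTE nbt) mul0r addr0.
    apply/negP => /hb h; move/negP: nbt; apply; apply/hb => v vt.
    by apply: h; rewrite (leq_trans vt).
case: (I T) => [[bT _]|[] //].
have := proj1 (hb T) bT t0 t0T; rewrite ltNge.
by move/negP.
Qed.

End H6.


Section Main.
Context d (Om : measurableType d) (R : realType) (P : probability Om R)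
  (F : nat -> set (set Om)) (X : nat -> Om -> R) (tau : Om -> option nat)
  (D s Rd : R).
Hypotheses (hF : filtration F) (hX : adapted F X) (hST : stopping_time F tau)
  (D0 : 0 <= D) (s0 : 0 <= s).
Hypothesis hC2 : forall t : nat, cond_bernstein_onesided P (F t) D s
     (fun w => (tlt t (tau w))%:R * (X t.+1 w - X t w - Rd)).

Definition Yd u w := (tlt u (tau w))%:R * (X u.+1 w - X u w - Rd).

Lemma tltF t : F t [set w | tlt t (tau w)].
Proof.
have [_ GC _] := (hF.1 t).1.
have := GC _ (hST t).
congr (F t); apply/seteqP; split => w /=.
  by move=> [_ /negP]; rewrite negbK.
by move=> h; split => //; rewrite h.
Qed.

Lemma Gind t : G_measurable (F t) (fun w => (tlt t (tau w))%:R : R).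
Proof.
have -> : (fun w => (tlt t (tau w))%:R : R) = \1_[set w | tlt t (tau w)].
  apply/funext => w; rewrite indicE; case: (boolP (tlt t (tau w))) => h.
    by rewrite mem_set.
  by rewrite memNset //=; apply/negP.
exact: Gmind (hF.1 t) (tltF t).
Qed.

Lemma hYd u : G_measurable (F u.+1) (Yd u).
Proof.
have sub := hF.2 _ _ (leqnSn u).
apply: (@GmM _ _ _ _ (fun w => (tlt u (tau w))%:R)
  (fun w => X u.+1 w - X u w - Rd) (hF.1 u.+1)).
  exact: Gm_mono sub (Gind u).
apply: (@GmB _ _ _ _ (fun w => X u.+1 w - X u w) (cst Rd) (hF.1 _)); last first.
  exact: Gmcst (hF.1 _).
apply: (@GmB _ _ _ _ (X u.+1) (X u) (hF.1 _)); first exact: hX.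
exact: Gm_mono sub (hX u).
Qed.

Lemma FsetT u : F u setT.
Proof. exact: Gset_measE (hF.1 u) measurableT. Qed.

Lemma mpre (g : Om -> R) (B : set R) : measurable_fun setT g -> measurable B ->
  measurable (g @^-1` B).
Proof. by move=> mg mB; have := mg measurableT B mB; rewrite setTI. Qed.

Lemma mX t : measurable_fun setT (X t).
Proof. exact: Gm_meas (hF.1 t) (hX t). Qed.

Lemma S0E w t : (forall u, (u < t)%N -> tlt u (tau w)) ->
  Ssum Yd (fun _ => setT) t w = X t w - X 0 w - t%:R * Rd.
Proof.
move=> h; rewrite /Ssum.
rewrite (@eq_big_nat _ _ _ _ _ _ (fun u => (X u.+1 w - X u w) - Rd)); last first.
  by move=> u /andP[_ ut]; rewrite indicT /= mul1r /Yd (h u ut) mul1r.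
by rewrite sumrB telescope_sumr// sumr_const_nat subn0 mulr_natl.
Qed.

Lemma final_bound (A : nat -> set Om) (E : set Om) (z : R) (T : nat) :
  0 < z -> (0 < T)%N -> (forall u, F u (A u)) -> measurable E ->
  (forall w, E w -> z <= Ssum Yd A T w) ->
  (P E <= (expR (- ((z ^+ 2 / 2) / (s * T%:R + z * D / 3))))%:E)%E.
Proof.
move=> z0 T0 hA mE hE.
have Tp : 0 < T%:R :> R by rewrite ltr0n.
have den0 : 0 <= s * T%:R + z * D / 3.
  have := mulr_ge0 (ltW z0) D0; have := mulr_ge0 s0 (ltW Tp); lra.
have [de|dne] := eqVneq (s * T%:R + z * D / 3) 0.
  by rewrite de invr0 mulr0 oppr0 expR0; exact: probability_le1.
have dp : 0 < s * T%:R + z * D / 3 by rewrite lt_neqAle eq_sym dne den0.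
have [lam [lam0 lamD hlam]] := choose_lam z0 s0 D0 Tp dp.
set psi := lam ^+ 2 * s / 2 / (1 - lam * D / 3).
have psi0 : 0 <= psi.
  rewrite /psi divr_ge0 ?divr_ge0 ?mulr_ge0 ?sqr_ge0//.
  have : lam * D / 3 <= 1 by lra.
  by rewrite subr_ge0.
have c1 : 1 <= expR psi by rewrite -expR0 ler_expR.
have hB u := hC2 u lam0 lamD.
apply: le_trans (markov_bound hF c1 hYd hA hB lam0 mE hE) _.
rewrite lee_fin -expRM_natr -expRD ler_expR.
exact: hlam.
Qed.

End Main.

End Helpers.
Import Helpers.
Unset Implicit Arguments.

Theorem lemma3p3 (d : measure_display) (Om : measurableType d) (R : realType)
  (P : probability Om R) (F : nat -> set (set Om)) (X : nat -> Om -> R)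
  (tau : Om -> option nat) (D s Rd : R) :
  filtration F -> adapted F X -> stopping_time F tau ->
  0 <= D -> 0 <= s ->
  (* (C1): for every t >= 1 (written t.+1), conditioned on F_t *)
  (forall t : nat, exists g, cond_exp_version P (F t) (X t.+1) g /\
     {ae P, forall w, (tlt t (tau w))%:R * (g w - X t w - Rd) <= 0}) ->
  (* (C2) *)
  (forall t : nat, cond_bernstein_onesided P (F t) D s
     (fun w => (tlt t (tau w))%:R * (X t.+1 w - X t w - Rd))) ->
  (* (i) *)
  (0 <= Rd -> forall (h : R) (T : nat), 0 < h -> (0 < T)%N ->
     let z := h - Rd * T%:R in 0 < z ->
     (P [set w | exists t : nat, [/\ (t <= T)%N, tle t (tau w) &
                                     (X 0%N w + h <= X t w)%R]]
      <= (expR (- ((z ^+ 2 / 2) / (s * T%:R + z * D / 3)))%R)%:E)%E)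
  /\
  (* (ii) *)
  (Rd < 0 -> forall (h : R) (T : nat), 0 < h -> (0 < T)%N ->
     let z := (- Rd) * T%:R - h in 0 < z ->
     (P [set w | tlt T (tau w) /\ (forall t : nat, (t <= T)%N -> (X 0%N w - h < X t w)%R)]
      <= (expR (- ((z ^+ 2 / 2) / (s * T%:R + z * D / 3)))%R)%:E)%E).
Proof.
move=> hF hX hST D0 s0 _ hC2; split.
- move=> Rd0 h T h0 T0 z z0.
  pose S0 v w := Ssum (Yd X tau Rd) (fun _ => setT) v w.
  have S0s v w : S0 v w = \sum_(0 <= k < v) Yd X tau Rd k w.
    by apply: eq_big_nat => k _; rewrite indicT /= mul1r.
  pose C u := [set w | forall v, (v <= u)%N -> S0 v w < z].
  apply: (final_bound hF hX hST D0 s0 hC2 (A := C)) => //.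
  + move=> u.
    have -> : C u = \bigcap_v (if (v <= u)%N then S0 v @^-1` `]-oo, z[ else setT).
      apply/seteqP; split => w /=.
        move=> hw v _; case: ifP => // vu; rewrite /= in_itv /=; exact: hw.
      move=> hw v vu; have := hw v I; rewrite vu /= in_itv /=; exact.
    apply: (Gset_measE (hF.1 u)); apply: bigcapT_measurable => v.
    case: ifP => vu; last exact: measurableT.
    apply: (Gset_meas (hF.1 u)); apply: Gm_set; last exact: measurable_itv.
    apply: (Gm_mono (hF.2 _ _ vu)).
    exact: (GS hF (hYd Rd hF hX hST) (FsetT hF)).
  + have -> : [set w | exists t : nat, [/\ (t <= T)%N, tle t (tau w) &
                                     (X 0%N w + h <= X t w)%R]] =
      \bigcup_t [set w | [/\ (t <= T)%N, tle t (tau w) & (X 0%N w + h <= X t w)%R]].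
      by apply/seteqP; split => w /= [t ht]; exists t.
    apply: bigcupT_measurable => t /=.
    case/orP: (leqVgt t T) => tT; last first.
      have -> : [set w | [/\ (t <= T)%N, tle t (tau w) & (X 0%N w + h <= X t w)%R]]
        = set0.
        by apply/seteqP; split => w //= [tT' _ _]; rewrite leqNgt tT in tT'.
      exact: measurable0.
    have -> : [set w | [/\ (t <= T)%N, tle t (tau w) & (X 0%N w + h <= X t w)%R]]
        = [set w | tle t (tau w)] `&` (X t \- X 0%N) @^-1` `[h, +oo[.
      apply/seteqP; split => w /=; rewrite in_itv /= andbT.
        by move=> [_ a b]; split => //; lra.
      by move=> [a b]; split => //; lra.
    apply: measurableI.
      case: t tT => [|k] _.
        have -> : [set w | tle 0 (tau w)] = setT.
          by apply/seteqP; split => w //= _; case: (tau w).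
        exact: measurableT.
      have -> : [set w | tle k.+1 (tau w)] = [set w | tlt k (tau w)].
        by apply/seteqP; split => w /=; case: (tau w).
      exact: Gsub (hF.1 k) (tltF hF hST k).
    apply: mpre; last exact: measurable_itv.
    by apply: measurable_funB; exact: mX hF hX _.
  + move=> w [t0 [t0T tle0 hX0]].
    rewrite /Ssum.
    under eq_big_nat => u _ do rewrite indicE.
    apply: (@inv_lemma _ (fun u => Yd X tau Rd u w) (fun u => w \in C u)) => //.
      move=> u; rewrite in_setE /C /=; split.
        by move=> H v vu; rewrite -S0s; exact: H.
      by move=> H v vu; rewrite S0s; exact: H.
    exists t0; split => //.
    rewrite -S0s /S0 S0E; last first.
      move=> u ut; move: tle0; case: (tau w) => //= n t0n.
      exact: leq_trans ut t0n.
    have : t0%:R * Rd <= T%:R * Rd by rewrite ler_wpM2r// ler_nat.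
    rewrite /z; lra.
- move=> Rneg h T h0 T0 z z0.
  apply: (final_bound hF hX hST D0 s0 hC2 (A := fun _ => setT)) => //.
  + exact: FsetT hF.
  + have -> : [set w | tlt T (tau w) /\ (forall t : nat, (t <= T)%N -> (X 0%N w - h < X t w)%R)]
      = [set w | tlt T (tau w)] `&`
        \bigcap_t [set w | (t <= T)%N -> (X 0%N w - h < X t w)%R].
      apply/seteqP; split => w /=.
        by move=> [a b]; split => // t _; exact: b.
      by move=> [a b]; split => // t; apply: b.
    apply: measurableI; first exact: Gsub (hF.1 T) (tltF hF hST T).
    apply: bigcapT_measurable => t /=.
    case/orP: (leqVgt t T) => tT; last first.
      have -> : [set w | (t <= T)%N -> (X 0%N w - h < X t w)%R] = setT.
        by apply/seteqP; split => w //= _ tT'; rewrite leqNgt tT in tT'.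
      exact: measurableT.
    have -> : [set w | (t <= T)%N -> (X 0%N w - h < X t w)%R] =
        (X t \- X 0%N) @^-1` `]-h, +oo[.
      apply/seteqP; split => w /=; rewrite in_itv /= andbT.
        by move=> /(_ tT); lra.
      by move=> H _; lra.
    apply: mpre; last exact: measurable_itv.
    by apply: measurable_funB; exact: mX hF hX _.
  + move=> w [hT hX0].
    rewrite S0E; last first.
      move=> u uT; move: hT; case: (tau w) => //= n Tn.
      exact: ltn_trans uT Tn.
    have := hX0 T (leqnn T).
    rewrite /z; lra.
Qed.
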